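(* For every finite connected chordal graph $G$, the set $D(G)=\{v: e(v)=\operatorname{diam}(G)\}$ of diametral vertices is a radius certificate of $G$: for every vertex $u$ there is $t\in D(G)$ with $d(u,t)\ge\operatorname{rad}(G)$.
   Context: A graph is chordal if every induced cycle of length at least 4 has a chord. $d$ shortest-path distance, $e(v)=\max_u d(v,u)$, $\operatorname{rad}(G)=\min_v e(v)$, $\operatorname{diam}(G)=\max_v e(v)$. *)

(* Defs.v *)
From mathcomp Require Import all_boot.
Set Implicit Arguments. Unset Strict Implicit. Unset Printing Implicit Defensive.

Section Graph.
Variables (T : finType) (e : rel T).

Definition simple_graph := symmetric e /\ irreflexive e.

Definition connected_graph := forall x y : T, connect e x y.

Fixpoint ball (k : nat) (x : T) : {set T} :=
  if k is k'.+1 then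
    ball k' x :|: [set y | [exists z in ball k' x, e z y]]
  else [set x].

(* shortest-path distance; for a connected graph every distance is < #|T|
   (the value #|T| only occurs for unreachable pairs) *)
Definition dist (x y : T) : nat := find (fun k => y \in ball k x) (iota 0 #|T|).

Definition ecc (v : T) : nat := \max_(u : T) dist v u.
Definition diam : nat := \max_(v : T) ecc v.
(* minimum of eccentricities; the neutral element diam is >= every ecc v,
   so this is exactly min_v ecc v when T is nonempty *)
Definition rad : nat := \big[minn/diam]_(v : T) ecc v.

Definition diametral : {set T} := [set v | ecc v == diam].

(* every cycle c (pairwise distinct vertices, consecutive ones adjacent,
   including last--first) of length >= 4 has a chord: two vertices that are
   not consecutive on the cycle but adjacent *)
Definition chordal : Prop :=
  forall (x : T) (s : seq T), let c := x :: s in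
    uniq c -> 4 <= size c -> cycle e c ->
    exists i j, [/\ i.+1 < j, j < size c, ~~ ((i == 0) && (j == (size c).-1))
                 & e (nth x c i) (nth x c j)].
End Graph.

(* Main.v *)
Require Import Defs.
From mathcomp Require Import all_boot zify.
From Stdlib Require Import Classical_Prop.
Set Implicit Arguments. Unset Strict Implicit. Unset Printing Implicit Defensive.

(* Proof: chordal graphs satisfy a Helly-type property for
   disks around cliques (proved by simplicial elimination, Dirac's lemma),
   which yields a vertex of eccentricity <= max_{t diametral} d(u,t). *)

Section Dist.
Context (T : finType) (e : rel T).
Hypothesis esym : symmetric e.
Hypothesis eirr : irreflexive e.
Hypothesis econn : connected_graph e.

Local Notation ball := (ball e).
Local Notation d := (dist e).

Lemma ballS k x : ball k.+1 x = ball k x :|: [set y | [exists z in ball k x, e z y]].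
Proof. by []. Qed.

Lemma ball0 x y : (y \in ball 0 x) = (y == x).
Proof. by rewrite /= in_set1. Qed.

Lemma ball_edge k x y z : y \in ball k x -> e y z -> z \in ball k.+1 x.
Proof.
move=> hy hz; rewrite ballS in_setU; apply/orP; right.
by rewrite inE; apply/existsP; exists y; rewrite hy hz.
Qed.

Lemma ball_S k x y : y \in ball k x -> y \in ball k.+1 x.
Proof. by move=> h; rewrite ballS in_setU h. Qed.

Lemma ball_mono k k' x y : k <= k' -> y \in ball k x -> y \in ball k' x.
Proof.
move=> /subnKC <-; elim: (k' - k) => [|n IH] h; first by rewrite addn0.
by rewrite addnS; apply: ball_S; apply: IH.
Qed.

Lemma ballSP k x y : y \in ball k.+1 x ->
  y \in ball k x \/ exists2 z, z \in ball k x & e z y.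
Proof.
rewrite ballS in_setU => /orP [h|]; first by left.
by rewrite inE => /existsP [z /andP [h1 h2]]; right; exists z.
Qed.

Lemma ball_trans a b x y z : y \in ball a x -> z \in ball b y -> z \in ball (a + b) x.
Proof.
move=> hy; elim: b z => [|b IH] z.
  by rewrite ball0 addn0 => /eqP ->.
move=> /ballSP [h|[w hw hwz]]; first by rewrite addnS; apply: ball_S; apply: IH.
by rewrite addnS; apply: ball_edge hwz; apply: IH.
Qed.

Lemma ball_sym k x y : y \in ball k x -> x \in ball k y.
Proof.
elim: k x y => [|k IH] x y; first by rewrite !ball0 eq_sym.
move=> /ballSP [h|[z hz hzy]]; first by apply: ball_S; apply: IH.
have h1 : z \in ball 1 y by apply: (@ball_edge 0 y y z); rewrite ?ball0 // esym.
by have := ball_trans h1 (IH _ _ hz); rewrite add1n.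
Qed.

Lemma path_ball x p : path e x p -> last x p \in ball (size p) x.
Proof.
elim: p x => [|y p IH] x /=; first by rewrite ball0.
move=> /andP [hxy hp].
have h1 : y \in ball 1 x by apply: (@ball_edge 0 x x y); rewrite ?ball0.
by have := ball_trans h1 (IH _ hp); rewrite add1n.
Qed.

Lemma ball_exists x y : exists2 k, k < #|T| & y \in ball k x.
Proof.
have /connectP [p hp ->] := econn x y.
case: (shortenP hp) => p' hp' hu _.
exists (size p'); last by apply: path_ball.
have := card_uniqP hu; rewrite /= => hs.
by have := max_card (mem (x :: p')); rewrite hs.
Qed.

Lemma dist_ball x y : y \in ball (d x y) x.
Proof.
have [k hk hb] := ball_exists x y.
have hh : has (fun k => y \in ball k x) (iota 0 #|T|).
  by apply/hasP; exists k; rewrite // mem_iota.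
have hf : find (fun k => y \in ball k x) (iota 0 #|T|) < #|T|.
  by rewrite -{2}(size_iota 0 #|T|) -has_find.
by have := nth_find 0 hh; rewrite nth_iota // add0n.
Qed.

Lemma dist_min x y k : y \in ball k x -> d x y <= k.
Proof.
move=> hb; rewrite leqNgt; apply/negP => hlt.
have hk : k < #|T|.
  apply: (leq_trans hlt); rewrite /dist.
  by rewrite -{2}(size_iota 0 #|T|) find_size.
have := before_find 0 hlt; rewrite nth_iota // add0n hb.
by [].
Qed.

Lemma dist_leP x y k : (d x y <= k) <-> (y \in ball k x).
Proof.
split; last by apply: dist_min.
by move=> h; apply: ball_mono h (dist_ball x y).
Qed.

Lemma dist0 x : d x x = 0.
Proof. by apply/eqP; rewrite -leqn0; apply: dist_min; rewrite ball0. Qed.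

Lemma dist_eq0 x y : d x y = 0 -> x = y.
Proof. by move=> h; have := dist_ball x y; rewrite h ball0 => /eqP. Qed.

Lemma dist_sym x y : d x y = d y x.
Proof.
by apply/eqP; rewrite eqn_leq; apply/andP; split; apply: dist_min;
  apply: ball_sym; apply: dist_ball.
Qed.

Lemma dist_tri x y z : d x z <= d x y + d y z.
Proof. by apply: dist_min; apply: ball_trans (dist_ball x y) (dist_ball y z). Qed.

Lemma dist_edge x y : e x y -> d x y <= 1.
Proof. by move=> h; apply: dist_min; apply: (@ball_edge 0 x x y); rewrite ?ball0. Qed.

Lemma dist_step x y : x != y -> exists2 z, e x z & d z y = (d x y).-1.
Proof.
move=> hxy.
have hb := dist_ball y x; rewrite dist_sym in hb.
case hk : (d x y) hb => [|k] hb.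
  by rewrite ball0 in hb; rewrite (eqP hb) eqxx in hxy.
case: (ballSP hb) => [h|[z hz hzx]].
  by have := dist_min h; rewrite -dist_sym hk ltnn.
exists z; first by rewrite esym.
try rewrite hk /=.
have h1 : d y z <= k := dist_min hz.
have h2 := dist_tri x z y.
have h3 := dist_edge hzx.
rewrite (dist_sym y z) in h1; rewrite (dist_sym x z) in h2; try rewrite hk in h2.
lia.
Qed.

End Dist.


Section Chordless.
Context (T : finType) (e : rel T).
Hypothesis esym : symmetric e.
Hypothesis eirr : irreflexive e.
Hypothesis echord : chordal e.

Definition adjseq (x0 : T) (c : seq T) :=
  forall k, k.+1 < size c -> e (nth x0 c k) (nth x0 c k.+1).

Definition goodp (s t : T) (A : {set T}) (c : seq T) :=
  [/\ 1 < size c, nth s c 0 = s, nth s c (size c).-1 = t, adjseq s c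
    & forall k, 0 < k -> k < (size c).-1 -> nth s c k \in A].

Lemma size_short (c : seq T) i j : i < j -> j < size c ->
  size (take i c ++ drop j c) = i + (size c - j).
Proof.
move=> hij hj; rewrite size_cat size_take size_drop.
by have -> : i < size c by lia.
Qed.

Lemma nth_short x0 (c : seq T) i j k : i < j -> j < size c ->
  nth x0 (take i c ++ drop j c) k = if k < i then nth x0 c k else nth x0 c (j + (k - i)).
Proof.
move=> hij hj; rewrite nth_cat size_take.
have -> : i < size c by lia.
case: ifP => hk; first by rewrite nth_take.
by rewrite nth_drop.
Qed.

Lemma goodp_short s t A c i j : s != t -> goodp s t A c -> i < j -> j < size c ->
  (i = 0 -> nth s c j = s) -> (0 < i -> e (nth s c i.-1) (nth s c j)) ->
  goodp s t A (take i c ++ drop j c).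
Proof.
move=> hst [h1 h2 h3 h4 h5] hij hj hi0 hi1.
have hs := size_short hij hj.
have hsz : 1 < i + (size c - j).
  case: i hij hi0 hi1 {hs} => [|i] hij hi0 hi1; last by lia.
  case: (ltnP j (size c).-1) => hh; first by lia.
  have hjj : j = (size c).-1 by lia.
  by move: (hi0 erefl); rewrite hjj h3 => hts; rewrite hts eqxx in hst.
split; rewrite ?hs //.
- rewrite nth_short //; case: ifP => hi //.
  have hi' : i = 0 by lia.
  by rewrite hi' addn0 hi0.
- rewrite nth_short //; have -> : ((i + (size c - j)).-1 < i) = false by lia.
  by have -> : j + ((i + (size c - j)).-1 - i) = (size c).-1 by lia.
- move=> k hk; rewrite hs in hk.
  rewrite (@nth_short s c i j k hij hj) (@nth_short s c i j k.+1 hij hj).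
  case: (ltnP k.+1 i) => hk1.
    have -> : k < i by lia.
    by apply: h4; lia.
  case: (ltnP k i) => hk2.
    have -> : j + (k.+1 - i) = j by lia.
    have -> : k = i.-1 by lia.
    by apply: hi1; lia.
  have -> : j + (k.+1 - i) = (j + (k - i)).+1 by lia.
  by apply: h4; lia.
- move=> k hk0 hk; rewrite nth_short //.
  case: ifP => hki; first by apply: h5 => //; lia.
  by apply: h5; lia.
Qed.

Lemma arith1 i j m n : i < j -> j < m -> m <= n.+1 -> i + (m - j) <= n.
Proof. lia. Qed.

Definition induced (s : T) (c : seq T) :=
  forall i j, i.+1 < j -> j < size c -> ~~ e (nth s c i) (nth s c j).

Lemma goodp_min s t A c : s != t -> goodp s t A c ->
  exists c', [/\ goodp s t A c', uniq c' & induced s c'].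
Proof.
move=> hst; move: {2}(size c) (leqnn (size c)) => n; elim: n c => [|n IH] c hn hg.
  by case: hg => h1; lia.
case hu: (uniq c); last first.
  move/negbT: hu => /(uniqPn s) [i [j [hij hj heq]]].
  have hg' := goodp_short hst hg hij hj.
  have [h1 h2 h3 h4 h5] := hg.
  apply: (IH (take i c ++ drop j c)).
  by rewrite size_short //; apply: arith1 hij hj hn.
  apply: hg'; first by move=> hi; rewrite -heq hi h2.
  by move=> hi; rewrite -heq; have := h4 i.-1; rewrite prednK //; apply; apply: ltn_trans hij hj.
case hind : [forall i : 'I_(size c), forall j : 'I_(size c),
    (i.+1 < j) ==> ~~ e (nth s c i) (nth s c j)].
  exists c; split => // i j hij hj.
  have hi : i < size c by lia.
  by move/forallP: hind => /(_ (Ordinal hi)) /forallP /(_ (Ordinal hj)) /implyP /= /(_ hij).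
move/negbT: hind; rewrite negb_forall => /existsP [i]; rewrite negb_forall => /existsP [j].
rewrite negb_imply negbK => /andP [hij he].
have hg' := goodp_short hst hg (i := i.+1) (j := j) hij (ltn_ord j).
apply: (IH (take i.+1 c ++ drop j c)); first by rewrite size_short //; apply: arith1 hij (ltn_ord j) hn.
by apply: hg'.
Qed.

Lemma chordless x s t A c : goodp s t A c -> uniq c -> induced s c -> ~~ e s t ->
  x \notin A -> e x s -> e x t -> (forall y, y \in A -> ~~ e x y) -> False.
Proof.
move=> [h1 h2 h3 h4 h5] hu hind hst hxA hxs hxt hA.
have hsz : 2 < size c.
  case: (ltnP 2 (size c)) => // hh.
  have hc : size c = 2 by lia.
  have := h4 0; rewrite hc => /(_ erefl); rewrite h2.
  by rewrite hc /= in h3; rewrite h3 (negbTE hst).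
have hxc : x \notin c.
  apply/negP => /(nthP s) [k hk hkx].
  case: k hk hkx => [|k] hk hkx.
    by move: hxs; rewrite -hkx h2 eirr.
  case: (ltnP k.+1 (size c).-1) => hk1.
    by move: hxA; rewrite -hkx (h5 _ _ hk1).
  have hk2 : k.+1 = (size c).-1 by set m := size c in hk hk1 *; lia.
  rewrite hk2 in hkx.
  by move: hxt; rewrite -hkx h3 eirr.
have := echord (x:=x) (s:=c); rewrite /= hxc hu /= => /(_ erefl).
have h4c : 4 <= (size c).+1 by lia.
move=> /(_ h4c).
have hcyc : path e x (rcons c x).
  apply/(pathP x) => i; rewrite size_rcons => hi.
  case: i hi => [|i] hi /=.
    have hc0 : 0 < size c by lia.
    by rewrite nth_rcons hc0 (set_nth_default s _ hc0) h2.
  rewrite !nth_rcons.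
  case: (ltnP i.+1 (size c)) => hi1.
    have hi0 : i < size c by lia.
    rewrite hi0 (set_nth_default s _ hi0) (set_nth_default s _ hi1).
    by apply: h4.
  have hii : i.+1 = size c by set m := size c in hi hi1 *; lia.
  have hi0 : i < size c by set m := size c in hi hi1 *; lia.
  rewrite hi0 (set_nth_default s _ hi0) hii eqxx.
  have -> : i = (size c).-1 by rewrite -hii.
  by rewrite h3 esym.
move=> /(_ hcyc) [i [j [hij hj hnot he]]].
case: i hij hnot he => [|i] hij hnot he.
  case: j hij hj hnot he => [|j] // hij hj hnot /= he.
  have hjc : j < size c by [].
  have hj0 : 0 < j by [].
  have hjl : j < (size c).-1.
    move: hnot; rewrite /= => hn.
    by set m := size c in hn hjc *; lia.
  have hjA : nth x c j \in A.
    by rewrite (set_nth_default s x hjc); apply: h5.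
  by move: (hA _ hjA); rewrite he.
case: j hij hj hnot he => [|j] // hij hj hnot /= he.
have hjc : j < size c by [].
have hic : i < size c by set m := size c in hjc *; lia.
have := hind i j hij hjc.
by rewrite (set_nth_default x s hic) (set_nth_default x s hjc) he.
Qed.


Definition clique (K : {set T}) := [forall a in K, forall b in K, (a != b) ==> e a b].
Definition simp (W : {set T}) v :=
  [forall a in W, forall b in W, [&& e v a, e v b & a != b] ==> e a b].

Lemma cliqueP K a b : clique K -> a \in K -> b \in K -> a != b -> e a b.
Proof. by move=> /forall_inP /(_ a) h ha hb hab; move/forall_inP: (h ha) => /(_ b hb) /implyP; apply. Qed.

Lemma cliqueI (K : {set T}) : (forall a b, a \in K -> b \in K -> a != b -> e a b) -> clique K.
Proof. by move=> h; apply/forall_inP => a ha; apply/forall_inP => b hb; apply/implyP; apply: h. Qed.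

Lemma simpP W v a b : simp W v -> a \in W -> b \in W -> e v a -> e v b -> a != b -> e a b.
Proof.
move=> /forall_inP /(_ a) h ha hb h1 h2 h3; move/forall_inP: (h ha) => /(_ b hb) /implyP; apply.
by rewrite h1 h2 h3.
Qed.

Lemma simpI (W : {set T}) v :
  (forall a b, a \in W -> b \in W -> e v a -> e v b -> a != b -> e a b) -> simp W v.
Proof.
move=> h; apply/forall_inP => a ha; apply/forall_inP => b hb; apply/implyP.
by move=> /and3P [h1 h2 h3]; apply: h.
Qed.

Lemma simp_lift (W1 W : {set T}) v : simp W1 v -> W1 \subset W ->
  (forall w, w \in W -> e v w -> w \in W1) -> simp W v.
Proof.
move=> hs hsub hn; apply: simpI => a b ha hb h1 h2 h3.
by apply: (simpP hs) => //; apply: hn.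
Qed.

Lemma clique_simp K v : clique K -> simp K v.
Proof. by move=> hc; apply: simpI => a b ha hb _ _ hab; exact: (cliqueP hc ha hb hab). Qed.

Lemma adjseq_path s q : path e s q -> adjseq s (s :: q).
Proof. by move=> /(pathP s) h k hk; apply: h. Qed.

Lemma connect_in (R : {set T}) y z :
  connect [rel a b | [&& a \in R, b \in R & e a b]] y z -> y \in R -> z \in R.
Proof.
move=> /connectP [p hp ->]; elim: p y hp => [|w p IH] y //= /andP [/and3P [_ hw _] hp] _.
by apply: IH.
Qed.

Lemma sep_clique (x y : T) (R S : {set T}) :
  let relR := [rel a b | [&& a \in R, b \in R & e a b]] in
  let A := [set z | connect relR y z] in
  y \in R -> x \notin R -> (forall a, a \in R -> ~~ e x a) ->
  (forall s, s \in S -> e x s /\ exists2 a, a \in A & e s a) -> clique S.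
Proof.
move=> relR A hyR hxR hRx hS; apply: cliqueI => s t hs ht hst.
case hest: (e s t) => //; exfalso.
have [hxs [a haA hsa]] := hS s hs.
have [hxt [b hbA htb]] := hS t ht.
have hsym : symmetric relR.
  by move=> u w; rewrite /relR /= esym andbCA.
have hab : connect relR a b.
  rewrite inE in haA hbA.
  rewrite (sym_connect_sym hsym) in haA.
  move: hbA; rewrite /A inE => hbA.
  exact: connect_trans haA hbA.
have hAR : forall z, z \in A -> z \in R by move=> z; rewrite inE => /connect_in; apply.
have /connectP [p hp hbl] := hab.
have hpA : forall z, z \in a :: p -> z \in A.
  move=> z hz; rewrite inE; apply: connect_trans (path_connect hp hz).
  by rewrite inE in haA.
set c := s :: rcons (a :: p) t.
have hg : goodp s t A c.
  split.
  - by rewrite /c /= size_rcons.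
  - by [].
  - by rewrite /c /= size_rcons /= nth_rcons /= ltnn eqxx.
  - apply: adjseq_path; rewrite rcons_path /= hsa /= -hbl (esym b) htb andbT.
    by apply: sub_path hp => u w /and3P [].
  - move=> k hk0 hk; rewrite /c /= size_rcons /= in hk.
    case: k hk0 hk => [|k] // _ hk /=.
    have hk' : k < size (a :: p) by clear -hk; rewrite /=; lia.
    have -> : nth s (a :: rcons p t) k = nth s (a :: p) k.
      change (nth s (rcons (a :: p) t) k = nth s (a :: p) k).
      by rewrite nth_rcons hk'.
    by apply: hpA; apply: mem_nth.
have hst' : s != t by [].
have [c' [hg' hu hind]] := goodp_min hst' hg.
apply: (chordless (x := x) hg' hu hind) => //.
- by rewrite hest.
- by apply/negP => /hAR; apply/negP.
- by move=> z /hAR; apply: hRx.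
Qed.

Lemma dirac2 n : forall W : {set T}, #|W| <= n -> W != set0 ->
  clique W \/ exists v1 v2, [/\ v1 \in W, v2 \in W, v1 != v2, ~~ e v1 v2 & simp W v1 && simp W v2].
Proof.
elim: n => [|n IH] W hWn hW0.
  by move: hW0; rewrite -cards_eq0; have -> : #|W| = 0 by clear -hWn; lia.
case hc: (clique W); first by left.
right.
move/negbT: hc => /forall_inPn [x hx] /forall_inPn [y hy].
rewrite negb_imply => /andP [hxy hexy].
set R := [set z in W | (z != x) && ~~ e x z].
set relR := [rel a b | [&& a \in R, b \in R & e a b]].
set A := [set z | connect relR y z].
set S := [set s in W | e x s && [exists a in A, e s a]].
have hyR : y \in R by rewrite inE hy eq_sym hxy.
have hxR : x \notin R by rewrite inE eqxx andbF.
have hRx : forall a, a \in R -> ~~ e x a by move=> a; rewrite inE => /and3P [].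
have hRW : forall a, a \in R -> a \in W by move=> a; rewrite inE => /andP [].
have hAR : forall z, z \in A -> z \in R by move=> z; rewrite inE => /connect_in; apply.
have hyA : y \in A by rewrite inE connect0.
have hxA : x \notin A by apply/negP => /hAR; apply/negP.
have hxS : x \notin S by rewrite inE eirr andbF.
have hSW : forall s, s \in S -> s \in W by move=> s; rewrite inE => /andP [].
have F2 : forall a w, a \in A -> w \in W -> e a w -> (w \in A) || (w \in S).
  move=> a w ha hw haw.
  case hwR : (w \in R).
    apply/orP; left; rewrite inE; apply: connect_trans (connect1 _).
      by rewrite inE in ha; exact: ha.
    by rewrite /= hwR (hAR _ ha).
  move/negbT: hwR; rewrite inE hw /= negb_and !negbK => /orP [/eqP hwx|hxw].
    by move: (hRx _ (hAR _ ha)); rewrite -hwx esym haw.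
  apply/orP; right; rewrite inE hw hxw /=; apply/existsP; exists a.
  by rewrite ha esym.
have hSc : clique S.
  apply: (sep_clique (R := R) hyR hxR hRx) => s; rewrite inE => /and3P [_ hxs /existsP [a /andP [ha hsa]]].
  by split => //; exists a.
set W1 := A :|: S.
have hW1W : W1 \subset W.
  by apply/subsetP => z; rewrite inE => /orP [/hAR/hRW|/hSW].
have hW1lt : #|W1| <= n.
  have : W1 \proper W.
    apply/properP; split => //; exists x => //.
    by rewrite inE negb_or hxA.
  by move=> /proper_card; clear -hWn; lia.
have hv1 : exists2 v1, v1 \in A & simp W v1.
  have hnb : forall v, v \in A -> simp W1 v -> simp W v.
    move=> v hv hs; apply: simp_lift hs hW1W _ => w hw hvw.
    by rewrite inE; apply: F2 hv hw hvw.
  have hW10 : W1 != set0 by apply/set0Pn; exists y; rewrite inE hyA.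
  case: (IH W1 hW1lt hW10) => [hcl|[v [v' [hv hv' hvv' hevv' /andP [hs hs']]]]].
    by exists y => //; apply: hnb => //; apply: clique_simp.
  case hvA: (v \in A); first by exists v => //; apply: hnb.
  case hvA': (v' \in A); first by exists v' => //; apply: hnb.
  have hvS : v \in S by move: hv; rewrite inE hvA.
  have hvS' : v' \in S by move: hv'; rewrite inE hvA'.
  by move: hevv'; rewrite (cliqueP hSc hvS hvS' hvv').
have [v1 hv1A hv1s] := hv1.
set W2 := W :\: A.
have hW2W : W2 \subset W by apply: subsetDl.
have hW2lt : #|W2| <= n.
  have : W2 \proper W.
    apply/properP; split => //; exists y => //.
    by rewrite inE hyA.
  by move=> /proper_card; clear -hWn; lia.
have hv2 : exists v2, [/\ v2 \in W2, v2 \notin S & simp W v2].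
  have hnb : forall v, v \in W2 -> v \notin S -> simp W2 v -> simp W v.
    move=> v hv hvS hs; apply: simp_lift hs hW2W _ => w hw hvw.
    rewrite inE hw andbT; apply/negP => hwA.
    move: hv; rewrite inE => /andP [hvA hvW].
    by move: (F2 _ _ hwA hvW); rewrite esym hvw (negbTE hvA) (negbTE hvS) => /(_ erefl).
  have hxW2 : x \in W2 by rewrite inE hxA hx.
  have hW20 : W2 != set0 by apply/set0Pn; exists x.
  case: (IH W2 hW2lt hW20) => [hcl|[v [v' [hv hv' hvv' hevv' /andP [hs hs']]]]].
    by exists x; split => //; apply: hnb => //; apply: clique_simp.
  case hvS: (v \in S); last first.
    by exists v; split; rewrite ?hvS //; apply: hnb; rewrite ?hvS.
  case hvS': (v' \in S); last first.
    by exists v'; split; rewrite ?hvS' //; apply: hnb; rewrite ?hvS'.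
  by move: hevv'; rewrite (cliqueP hSc hvS hvS' hvv').
have [v2 [hv2W2 hv2S hv2s]] := hv2.
move: hv2W2; rewrite inE => /andP [hv2A hv2W].
exists v1, v2; split => //; last by rewrite hv1s hv2s.
- by apply: hRW; apply: hAR.
- by apply/eqP => h; move: hv2A; rewrite -h hv1A.
- apply/negP => h; move: (F2 _ _ hv1A hv2W h).
  by rewrite (negbTE hv2A) (negbTE hv2S).
Qed.

End Chordless.


Section HS.
Context (T : finType) (e : rel T).
Hypothesis esym : symmetric e.
Hypothesis eirr : irreflexive e.
Hypothesis econn : connected_graph e.
Hypothesis echord : chordal e.
Local Notation d := (dist e).

Lemma dsym x y : d x y = d y x. Proof. exact: dist_sym. Qed.
Lemma dtri x y z : d x z <= d x y + d y z. Proof. exact: dist_tri. Qed.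
Lemma dedge x y : e x y -> d x y <= 1. Proof. exact: dist_edge. Qed.
Lemma dclq (K : {set T}) a b : clique e K -> a \in K -> b \in K -> d a b <= 1.
Proof.
move=> hK ha hb; case hab: (a == b); first by rewrite (eqP hab) dist0.
by apply: dedge; apply: (cliqueP hK ha hb); rewrite hab.
Qed.
Lemma dpos x y : x != y -> 0 < d x y.
Proof.
move=> hxy; rewrite lt0n; apply/negP => /eqP h.
by move: hxy; rewrite (dist_eq0 econn h) eqxx.
Qed.

Definition inB (K : {set T}) r y := exists2 a, a \in K & d a y <= r.
Definition nearp (K L : {set T}) n := exists a b, [/\ a \in K, b \in L & d a b < n].
Definition wfc (W K : {set T}) := [/\ K \subset W, K != set0 & clique e K].
Definition good (W : {set T}) := forall x y, x \in W -> y \in W -> x != y ->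
  exists2 z, z \in W & e x z /\ d z y = (d x y).-1.

Section Trans.
Variables (W : {set T}) (v : T).
Hypothesis hvW : v \in W.
Hypothesis hgood : good W.
Hypothesis hsimp : simp e W v.
Hypothesis hmore : exists2 z, z \in W & z != v.

Definition NN := [set a in W | e v a].

Lemma NN_sub a : a \in NN -> a \in W /\ e v a.
Proof. by rewrite inE => /andP. Qed.

Lemma NN_clique : clique e NN.
Proof.
apply: cliqueI => a b /NN_sub [ha hva] /NN_sub [hb hvb] hab.
exact: (simpP hsimp ha hb hva hvb hab).
Qed.

Lemma NN_neq a : a \in NN -> a != v.
Proof. by move=> /NN_sub [_ h]; apply/negP => /eqP ha; move: h; rewrite ha eirr. Qed.

Lemma fstep y : y \in W -> y != v -> exists2 b, b \in NN & d b y = (d v y).-1.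
Proof.
move=> hy hyv; have hvy : v != y by rewrite eq_sym.
have [z hz [hvz hd]] := hgood hvW hy hvy.
by exists z => //; rewrite inE hz hvz.
Qed.

Lemma NN0 : NN != set0.
Proof.
have [z hz hzv] := hmore; have [b hb _] := fstep hz hzv.
by apply/set0Pn; exists b.
Qed.

Lemma f1 a y : a \in NN -> y \in W -> y != v -> d a y <= d v y.
Proof.
move=> ha hy hyv; have [b hb hdb] := fstep hy hyv.
have h1 := dclq NN_clique ha hb.
have h2 := dtri a b y.
have h3 : 0 < d v y by apply: dpos; rewrite eq_sym.
clear -h1 h2 h3 hdb; lia.
Qed.

Lemma good_del : good (W :\ v).
Proof.
move=> x y /setD1P [hxv hx] /setD1P [hyv hy] hxy.
have [z hz [hxz hdz]] := hgood hx hy hxy.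
case hzv: (z == v); last by exists z; [rewrite in_setD1 hzv hz | split].
move/eqP: hzv => hzv; subst z.
have [b hb hdb] := fstep hy hyv.
have hvx : e v x by rewrite esym.
have hxN : x \in NN by rewrite inE hx hvx.
have hpos : 0 < d v y by apply: dpos; rewrite eq_sym.
have hxb : x != b.
  apply/negP => /eqP hxb; subst b.
  clear -hdb hdz hpos; lia.
have heb := cliqueP NN_clique hxN hb hxb.
have h1 := dedge heb.
have h2 := dtri x b y.
clear -h1 h2 hdb hdz hpos; lia.
Qed.

Definition tau (K : {set T}) (r : nat) : {set T} * nat :=
  if v \in K then (if K == [set v] then (NN, r.-1) else (K :\ v, r)) else (K, r).

Lemma big_other (K : {set T}) : clique e K -> K \subset W -> v \in K -> K != [set v] ->
  (exists a, a \in K :\ v) /\ (forall a, a \in K :\ v -> a \in NN).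
Proof.
move=> hK hKW hvK hKv; split.
  case: (pickP (mem (K :\ v))) => [a ha|h0]; first by exists a.
  exfalso; move/negP: hKv; apply; apply/eqP/setP => z; rewrite in_set1.
  apply/idP/idP => [hz|/eqP -> //].
  apply/negPn/negP => hzv.
  by move: (h0 z); rewrite /= in_setD1 hzv hz.
move=> a /setD1P [hav haK]; rewrite inE (subsetP hKW _ haK) /=.
by apply: (cliqueP hK hvK haK); rewrite eq_sym.
Qed.

Lemma tau_wf K r : wfc W K -> wfc (W :\ v) (tau K r).1.
Proof.
move=> [hKW hK0 hKc]; rewrite /tau.
case: ifP => hvK; last first.
  split => //; apply/subsetP => z hz; rewrite in_setD1 (subsetP hKW _ hz) andbT.
  by apply/negP => /eqP hzv; rewrite -hzv hz in hvK.
case: ifP => hKv /=.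
  split; [|exact: NN0|exact: NN_clique].
  apply/subsetP => z hz; rewrite in_setD1 (NN_neq hz) /=.
  by case: (NN_sub hz).
have [[a ha] hsub] := big_other hKc hKW hvK (negbT hKv).
split.
- apply/subsetP => z /setD1P [hzv hz]; rewrite in_setD1 hzv.
  exact: (subsetP hKW).
- by apply/set0Pn; exists a.
- apply: cliqueI => x y /setD1P [_ hx] /setD1P [_ hy] hxy.
  exact: (cliqueP hKc hx hy hxy).
Qed.

Lemma tau_back (K : {set T}) (r : nat) c : 0 < r -> inB (tau K r).1 (tau K r).2 c -> inB K r c.
Proof.
move=> hr; rewrite /tau; case: ifP => hvK //.
case: ifP => hKv /= [a ha hac].
  exists v => //.
  have h1 : d v a <= 1 by apply: dedge; case: (NN_sub ha).
  have h2 := dtri v a c.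
  clear -h1 h2 hac hr; lia.
by exists a => //; move: ha => /setD1P [].
Qed.

Lemma tau_fwd K r y : wfc W K -> 0 < r -> y \in W -> y != v -> inB K r y ->
  inB (tau K r).1 (tau K r).2 y.
Proof.
move=> [hKW hK0 hKc] hr hy hyv [a ha hay]; rewrite /tau.
case: ifP => hvK; last by exists a.
case: ifP => hKv /=.
  move/eqP: hKv => hKv; rewrite hKv in ha; move/set1P: ha => ha; subst a.
  have [b hb hdb] := fstep hy hyv.
  by exists b => //; rewrite hdb; clear -hay; lia.
have [[a' ha'] hsub] := big_other hKc hKW hvK (negbT hKv).
case hav: (a == v).
  move/eqP: hav => hav; subst a.
  exists a' => //; apply: leq_trans hay; apply: f1 => //; exact: hsub.
by exists a => //; rewrite in_setD1 hav ha.
Qed.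

Lemma tau_v K r a0 : wfc W K -> 0 < r -> a0 \in NN -> inB K r v ->
  inB (tau K r).1 (tau K r).2 a0.
Proof.
move=> [hKW hK0 hKc] hr ha0 [a ha hav]; rewrite /tau.
case: ifP => hvK; last first.
  exists a => //.
  have haW := subsetP hKW _ ha.
  have hanv : a != v by apply/negP => /eqP h; rewrite -h ha in hvK.
  have := f1 ha0 haW hanv; rewrite (dsym a0 a) (dsym v a) => h.
  exact: leq_trans h hav.
case: ifP => hKv /=.
  by exists a0 => //; rewrite dist0.
have [[a' ha'] hsub] := big_other hKc hKW hvK (negbT hKv).
exists a' => //; apply: leq_trans (dclq NN_clique (hsub _ ha') ha0) _.
exact: hr.
Qed.

Lemma tau_keep (K : {set T}) (r : nat) a : a \in K -> a != v -> a \in (tau K r).1 /\ (tau K r).2 = r.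
Proof.
move=> ha hav; rewrite /tau; case: ifP => hvK; last by [].
case: ifP => hKv /=.
  by move/eqP: hKv => hKv; rewrite hKv in ha; move/set1P: ha => ha; rewrite ha eqxx in hav.
by rewrite in_setD1 hav ha.
Qed.

Lemma tau_proj K r b : wfc W K -> 0 < r -> v \in K -> b \in W -> b != v ->
  exists2 a', a' \in (tau K r).1 & d a' b + r <= d v b + (tau K r).2.
Proof.
move=> [hKW hK0 hKc] hr hvK hb hbv; rewrite /tau hvK.
case: ifP => hKv /=.
  have [b' hb' hdb] := fstep hb hbv.
  exists b' => //; rewrite hdb.
  have : 0 < d v b by apply: dpos; rewrite eq_sym.
  clear -hr; lia.
have [[a' ha'] hsub] := big_other hKc hKW hvK (negbT hKv).
exists a' => //; rewrite leq_add2r; apply: f1 => //; exact: hsub.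
Qed.

Lemma tau_near K r L s : wfc W K -> wfc W L -> 0 < r -> 0 < s ->
  nearp K L (r + s) -> tau K r <> tau L s ->
  nearp (tau K r).1 (tau L s).1 ((tau K r).2 + (tau L s).2).
Proof.
move=> hK hL hr hs [a [b [ha hb hab]]] hne.
have [hKW _ hKc] := hK; have [hLW _ hLc] := hL.
have haW := subsetP hKW _ ha; have hbW := subsetP hLW _ hb.
case hav: (a == v); case hbv: (b == v).
- move/eqP: hav => hav; move/eqP: hbv => hbv; subst a b.
  move: hne; rewrite /tau ha hb.
  case: ifP => hKv; case: ifP => hLv /= hne.
  + have hrs : r != s by apply/negP => /eqP hrs; apply: hne; rewrite hrs.
    have [n hn] := set0Pn _ NN0.
    exists n, n; split => //; rewrite dist0.
    clear -hrs hr hs; lia.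
  + have [[l hl] hsub] := big_other hLc hLW hb (negbT hLv).
    exists (l : T), l; split => //; first exact: hsub.
    by rewrite dist0; clear -hr hs; lia.
  + have [[k hk] hsub] := big_other hKc hKW ha (negbT hKv).
    exists k, k; split => //; first exact: hsub.
    by rewrite dist0; clear -hr hs; lia.
  + have [[k hk] hsubk] := big_other hKc hKW ha (negbT hKv).
    have [[l hl] hsubl] := big_other hLc hLW hb (negbT hLv).
    exists k, l; split => //.
    have := dclq NN_clique (hsubk _ hk) (hsubl _ hl).
    clear -hr hs; lia.
- move/eqP: hav => hav; subst a.
  have [hbL hs'] := tau_keep s hb (negbT hbv).
  have [a' ha' hda] := tau_proj hK hr ha hbW (negbT hbv).
  exists a', b; split => //; rewrite hs'.
  clear -hda hab; lia.
- move/eqP: hbv => hbv; subst b.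
  have [haK hr'] := tau_keep r ha (negbT hav).
  have [b' hb' hdb] := tau_proj hL hs hb haW (negbT hav).
  exists a, b'; split => //; rewrite hr' (dsym a b').
  rewrite (dsym a v) in hab.
  clear -hdb hab; lia.
- have [haK hr'] := tau_keep r ha (negbT hav).
  have [hbL hs'] := tau_keep s hb (negbT hbv).
  by exists a, b; split => //; rewrite hr' hs'.
Qed.

End Trans.

End HS.


Section Main.
Context (T : finType) (e : rel T).
Hypothesis esym : symmetric e.
Hypothesis eirr : irreflexive e.
Hypothesis econn : connected_graph e.
Hypothesis echord : chordal e.
Local Notation d := (dist e).

Lemma hs2 n : forall W : {set T}, #|W| <= n -> good e W -> forall u, u \in W ->
  forall F1 F2 : {set T} -> nat -> Prop,
  (forall K r, F1 K r \/ F2 K r -> wfc e W K) ->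
  (forall K r, F1 K r -> inB e K r u) ->
  (forall K r L s, F2 K r -> F1 L s \/ F2 L s -> (K, r) <> (L, s) -> nearp e K L (r + s)) ->
  exists2 c, c \in W & forall K r, F1 K r \/ F2 K r -> inB e K r c.
Proof.
elim: n => [|n IH] W hWn hgW u hu F1 F2 hwf h1 h2.
  by move: hWn; rewrite leqn0 cards_eq0 => /eqP hW; rewrite hW inE in hu.
case: (classic (exists K, F2 K 0)) => [[K0 hK0]|hno2].
  have [hKW hK0n hKc] := hwf K0 0 (or_intror hK0).
  have [x hx] := set0Pn _ hK0n.
  exists x; first exact: (subsetP hKW).
  move=> L s hL.
  case: (classic ((K0, 0) = (L, s))) => [[<- <-]|hne].
    by exists x => //; rewrite dist0.
  have [a [b [ha hb hab]]] := h2 _ _ _ _ hK0 hL hne.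
  exists b => //.
  have h3 := dclq hKc ha hx.
  have h4 := dtri econn b a x.
  rewrite (dsym esym econn b a) in h4.
  clear -hab h3 h4; lia.
case: (classic (exists K, F1 K 0)) => [[K0 hK0]|hno1].
  exists u => //.
  have [hKW hK0n hKc] := hwf K0 0 (or_introl hK0).
  have [a haK hau] := h1 _ _ hK0.
  have hau' : a = u by apply: (dist_eq0 econn); clear -hau; lia.
  subst a.
  move=> L s [hL|hL]; first exact: h1.
  case: (classic ((L, s) = (K0, 0))) => [[hL1 hs1]|hne].
    by exfalso; apply: hno2; exists K0; rewrite -hL1 -hs1.
  have [a [b [ha hb hab]]] := h2 _ _ _ _ hL (or_introl hK0) hne.
  exists a => //.
  have h3 := dclq hKc hb haK.
  have h4 := dtri econn a b u.
  clear -hab h3 h4; lia.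
have hpos : forall K r, F1 K r \/ F2 K r -> 0 < r.
  move=> K [|r] // [h|h]; [by exfalso; apply: hno1; exists K | by exfalso; apply: hno2; exists K].
case: (pickP (fun z => (z \in W) && (z != u))) => [z0 /andP [hz0 hz0u]|hnone]; last first.
  exists u => // K r hK.
  have [hKW hK0n hKc] := hwf K r hK.
  have [a ha] := set0Pn _ hK0n.
  have := hnone a; rewrite /= (subsetP hKW _ ha) /= => /negbFE /eqP hau; subst a.
  by exists u => //; rewrite dist0.
have hW0 : W != set0 by apply/set0Pn; exists u.
have [v hvW hsimp] : exists2 v, v \in W & simp e W v.
  case: (dirac2 esym eirr echord (leqnn #|W|) hW0) => [hc|[v1 [v2 [hv1 _ _ _ /andP [hs1 _]]]]].
    by exists u => //; apply: clique_simp.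
  by exists v1.
have hmore : exists2 z, z \in W & z != v.
  case: (eqVneq u v) => [huv|huv]; first by exists z0 => //; rewrite -huv.
  by exists u.
have hH : #|W :\ v| <= n.
  have := cardsD1 v W; rewrite hvW => h.
  clear -h hWn; lia.
have hgH := good_del esym econn hvW hgW hsimp.
have [a0 ha0] := set0Pn _ (NN0 hvW hgW hmore).
have ha0W : a0 \in W :\ v.
  rewrite in_setD1 (NN_neq eirr ha0) /=.
  by move: ha0; rewrite inE => /andP [].
pose u' := if u == v then a0 else u.
have hu' : u' \in W :\ v.
  rewrite /u'; case: ifP => huv //.
  by rewrite in_setD1 huv hu.
pose F1' K' r' := exists K r, F1 K r /\ tau e W v K r = (K', r').
pose F2' K' r' := exists K r, F2 K r /\ tau e W v K r = (K', r').
have hwf' : forall K' r', F1' K' r' \/ F2' K' r' -> wfc e (W :\ v) K'.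
  move=> K' r' hh.
  have [K [r [hK heq]]] : exists K r, (F1 K r \/ F2 K r) /\ tau e W v K r = (K', r').
    by case: hh => [[K [r [hK heq]]]|[K [r [hK heq]]]]; exists K, r; split => //; [left|right].
  have := tau_wf eirr hvW hgW hsimp hmore r (hwf K r hK).
  by rewrite heq.
have h1' : forall K' r', F1' K' r' -> inB e K' r' u'.
  move=> K' r' [K [r [hK heq]]].
  have hwK := hwf K r (or_introl hK).
  have hr := hpos K r (or_introl hK).
  rewrite /u'; case: ifP => huv.
    move/eqP: huv => huv.
    have := tau_v esym econn hvW hgW hsimp hwK hr ha0.
    by rewrite heq /=; apply; rewrite -huv; apply: h1.
  have := tau_fwd econn hvW hgW hsimp hwK hr hu (negbT huv) (h1 _ _ hK).
  by rewrite heq.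
have h2' : forall K' r' L' s', F2' K' r' -> F1' L' s' \/ F2' L' s' -> (K', r') <> (L', s') ->
    nearp e K' L' (r' + s').
  move=> K' r' L' s' [K [r [hK heq]]] hh hne.
  have [L [s [hL heqL]]] : exists L s, (F1 L s \/ F2 L s) /\ tau e W v L s = (L', s').
    by case: hh => [[L [s [hL heqL]]]|[L [s [hL heqL]]]]; exists L, s; split => //; [left|right].
  have hKL : (K, r) <> (L, s).
    by move=> [hK1 hr1]; apply: hne; rewrite -heq -heqL hK1 hr1.
  have hwK := hwf K r (or_intror hK).
  have hwL := hwf L s hL.
  have hr := hpos K r (or_intror hK).
  have hs := hpos L s hL.
  have htne : tau e W v K r <> tau e W v L s by rewrite heq heqL.
  have := tau_near esym econn hvW hgW hsimp hmore hwK hwL hr hs (h2 _ _ _ _ hK hL hKL) htne.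
  by rewrite heq heqL.
have [c hcH hc] := IH (W :\ v) hH hgH u' hu' F1' F2' hwf' h1' h2'.
exists c; first by move: hcH; rewrite in_setD1 => /andP [].
move=> K r hK.
apply: (tau_back econn (W := W) (v := v) (hpos K r hK)).
apply: hc.
case: hK => hK; [left|right]; exists K, r; split => //; by case: (tau e W v K r).
Qed.

End Main.


Lemma bigmin_le (T : eqType) (r : seq T) (F : T -> nat) x0 c :
  c \in r -> \big[minn/x0]_(i <- r) F i <= F c.
Proof.
elim: r => //= a r IH; rewrite big_cons inE => /orP [/eqP ->|h].
  exact: geq_minl.
exact: leq_trans (geq_minr _ _) (IH h).
Qed.

Theorem proposition11 (T : finType) (e : rel T) :
  simple_graph e -> connected_graph e -> chordal e ->
  forall u : T, exists2 t, t \in diametral e & rad e <= dist e u t.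
Proof.
move=> [esym eirr] econn echord u.
have hT : 0 < #|T| by apply/card_gt0P; exists u.
have [v0 hv0] := eq_bigmax (ecc e) hT.
have hv0M : v0 \in diametral e by rewrite inE /diam hv0.
case: (@arg_maxnP _ v0 (mem (diametral e)) (fun t => dist e u t) hv0M) => t0 ht0M ht0max.
exists t0 => //.
set k := dist e u t0.
have hMk : forall t, t \in diametral e -> dist e u t <= k by move=> t ht; apply: ht0max.
have hecc : forall x y, dist e x y <= ecc e x by move=> x y; apply: (leq_bigmax (F := dist e x)).
have hdiam : forall x, ecc e x <= diam e by move=> x; apply: (leq_bigmax (F := ecc e)).
have hD : diam e <= k + k.
  have hT' : 0 < #|T| := hT.
  have [t1 ht1] := eq_bigmax (dist e v0) hT'.
  have hdv : diam e = dist e v0 t1 by rewrite /diam hv0 /ecc ht1.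
  have ht1M : t1 \in diametral e.
    rewrite inE eqn_leq hdiam /= hdv (dist_sym esym econn); exact: hecc.
  rewrite hdv.
  have h1 := dist_tri econn v0 u t1.
  have h2 := hMk _ hv0M; have h3 := hMk _ ht1M.
  rewrite (dist_sym esym econn v0 u) in h1.
  clear -h1 h2 h3; lia.
pose F1 (K : {set T}) (r : nat) := exists t, [/\ t \in diametral e, K = [set t] & r = k].
pose F2 (K : {set T}) (r : nat) := exists t, [/\ t \notin diametral e, K = [set t] & r = k].
have hgood : good e [set: T].
  move=> x y _ _ hxy; have [z hz hd] := dist_step esym econn hxy.
  by exists z; rewrite ?inE.
have hwf : forall K r, F1 K r \/ F2 K r -> wfc e [set: T] K.
  move=> K r hh.
  have [t ->] : exists t, K = [set t].
    by case: hh => [[t [_ -> _]]|[t [_ -> _]]]; exists t.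
  split; first exact: subsetT.
    by apply/set0Pn; exists t; rewrite inE.
  by apply: cliqueI => a b /set1P -> /set1P ->; rewrite eqxx.
have h1 : forall K r, F1 K r -> inB e K r u.
  move=> K r [t [htM -> ->]]; exists t; rewrite ?inE //.
  by rewrite (dist_sym esym econn); apply: hMk.
have h2 : forall K r L s, F2 K r -> F1 L s \/ F2 L s -> (K, r) <> (L, s) -> nearp e K L (r + s).
  move=> K r L s [x [hxM -> ->]] hh _.
  have [y [-> ->]] : exists y, L = [set y] /\ s = k.
    by case: hh => [[y [_ -> ->]]|[y [_ -> ->]]]; exists y.
  exists x, y; split; rewrite ?inE //.
  have hx1 := hecc x y.
  have hx2 : ecc e x != diam e by move: hxM; rewrite inE.
  have hx3 := hdiam x.
  have hx4 : ecc e x < diam e by rewrite ltn_neqAle hx2 hx3.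
  clear -hx1 hx4 hD; lia.
have [c _ hc] := hs2 esym eirr econn echord (leqnn #|[set: T]|) hgood (in_setT u) hwf h1 h2.
have heccc : ecc e c <= k.
  apply/bigmax_leqP => y _.
  have hy : F1 [set y] k \/ F2 [set y] k.
    case hyM : (y \in diametral e); [left|right]; exists y; split => //; by rewrite hyM.
  have [a /set1P -> hay] := hc _ _ hy.
  by rewrite (dist_sym esym econn).
apply: leq_trans heccc.
by rewrite /rad; apply: bigmin_le; rewrite mem_index_enum.
Qed.
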